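(* In the free second-type associative algebra $\mathcal{A}s_2\langle X\rangle$, for all elements $a,b,c,d,e$ the identity \[ abcde=abced-bcaed+bcade \] holds.
   Context: An associative algebra is called of the second type if it satisfies the identity $abc-acb-bac+bca+cab-cba=0$ for all $a,b,c$. $\mathcal{A}s_2\langle X\rangle$ denotes the free algebra of this variety on a countable generating set $X$, over a field of characteristic $0$. *)

(* Defs.v *)
From HB Require Import structures.
From mathcomp Require Import all_boot all_algebra.
Set Implicit Arguments. Unset Strict Implicit. Unset Printing Implicit Defensive.
Import GRing.Theory.
Local Open Scope ring_scope.

Record assocAlg (F : fieldType) := AssocAlg {
  carrier :> lmodType F;
  amul : carrier -> carrier -> carrier;
  amulA : forall x y z, amul x (amul y z) = amul (amul x y) z;
  amulDl : forall x y z, amul (x + y) z = amul x z + amul y z;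
  amulDr : forall x y z, amul x (y + z) = amul x y + amul x z;
  amulZl : forall (k : F) x y, amul (k *: x) y = k *: amul x y;
  amulZr : forall (k : F) x y, amul x (k *: y) = k *: amul x y
}.

Definition second_type (F : fieldType) (A : assocAlg F) : Prop :=
  forall a b c : A,
    amul (amul a b) c - amul (amul a c) b - amul (amul b a) c
    + amul (amul b c) a + amul (amul c a) b - amul (amul c b) a = 0.

Definition alg_hom (F : fieldType) (A B : assocAlg F) (h : A -> B) : Prop :=
  (forall x y : A, h (x + y) = h x + h y) /\
  (forall (k : F) (x : A), h (k *: x) = k *: h x) /\
  (forall x y : A, h (amul x y) = amul (h x) (h y)).

(* (A, i) is the free algebra of the variety of second-type associative
   algebras on the countable generating set X = nat, given by its
   universal property. *)
Definition is_free_As2 (F : fieldType) (A : assocAlg F) (i : nat -> A) : Prop :=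
  second_type A /\
  forall (B : assocAlg F) (g : nat -> B), second_type B ->
    exists h : A -> B, alg_hom h /\ (forall n, h (i n) = g n) /\
      forall h' : A -> B, alg_hom h' -> (forall n, h' (i n) = g n) ->
        forall x, h' x = h x.

(* Main.v *)
Require Import Defs.
From mathcomp Require Import all_boot all_algebra.
Import GRing.Theory.
Local Open Scope ring_scope.

Section Aux.
Variables (F : fieldType) (A : assocAlg F) (env : nat -> A).

Definition fstep (acc : A) (y : nat) := amul acc (env y).

Definition wev (w : seq nat) : A :=
  match w with [::] => 0 | x :: r => foldl fstep (env x) r end.

Lemma foldl_amul s : forall z t, foldl fstep (amul z t) s = amul z (foldl fstep t s).
Proof.
elim: s => [|y s IH] z t //=.
by rewrite /fstep -amulA IH.
Qed.

Lemma wev_cat u v : u != [::] -> v != [::] -> wev (u ++ v) = amul (wev u) (wev v).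
Proof.
case: u => [|x r] // _; case: v => [|y s] // _.
by rewrite /= foldl_cat /= -foldl_amul.
Qed.

Lemma amul0l y : amul (0 : A) y = 0.
Proof. by have := amulZl 0 0 y; rewrite !scale0r. Qed.
Lemma amul0r y : amul y (0 : A) = 0.
Proof. by have := amulZr 0 y 0; rewrite !scale0r. Qed.
Lemma amulNl x y : amul (- x : A) y = - amul x y.
Proof. by rewrite -scaleN1r amulZl scaleN1r. Qed.
Lemma amulNr x y : amul x (- y : A) = - amul x y.
Proof. by rewrite -scaleN1r amulZr scaleN1r. Qed.

Definition mulL (u : seq nat) (m : A) := if u is [::] then m else amul (wev u) m.
Definition mulR (v : seq nat) (m : A) := if v is [::] then m else amul m (wev v).

Lemma wev_catL u w : w != [::] -> wev (u ++ w) = mulL u (wev w).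
Proof. by case: u => [|x r] wn //; rewrite /mulL wev_cat. Qed.
Lemma wev_catR w v : w != [::] -> wev (w ++ v) = mulR v (wev w).
Proof. by case: v => [|x r] wn; [rewrite cats0 | rewrite /mulR wev_cat]. Qed.

Definition G u v m := mulL u (mulR v m).
Lemma GD u v x y : G u v (x + y) = G u v x + G u v y.
Proof. by rewrite /G; case: u => [|? ?]; case: v => [|? ?] /=; rewrite ?amulDl ?amulDr ?amulDl. Qed.
Lemma GN u v x : G u v (- x) = - G u v x.
Proof. by rewrite /G; case: u => [|? ?]; case: v => [|? ?] /=; rewrite ?amulNl ?amulNr ?amulNl. Qed.
Lemma G0 u v : G u v 0 = 0.
Proof. by rewrite /G; case: u => [|? ?]; case: v => [|? ?] /=; rewrite ?amul0l ?amul0r ?amul0l. Qed.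

Definition poly := seq (int * seq nat).
Definition peval (P : poly) : A := \sum_(t <- P) wev t.2 *~ t.1.
Definition scl (c : int) (P : poly) : poly := map (fun t => (c * t.1, t.2)) P.

Lemma peval_cat P Q : peval (P ++ Q) = peval P + peval Q.
Proof. by rewrite /peval big_cat. Qed.
Lemma peval_scl c P : peval (scl c P) = peval P *~ c.
Proof.
rewrite /peval /scl big_map mulrz_suml; apply: eq_bigr => t _ /=.
by rewrite mulrC mulrzA.
Qed.

Definition gen (u x y z v : seq nat) : poly :=
  [:: (1, u ++ (x ++ (y ++ z)) ++ v); (-1, u ++ (x ++ (z ++ y)) ++ v);
      (-1, u ++ (y ++ (x ++ z)) ++ v); (1, u ++ (y ++ (z ++ x)) ++ v);
      (1, u ++ (z ++ (x ++ y)) ++ v); (-1, u ++ (z ++ (y ++ x)) ++ v)].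

Lemma wev3 u x y z v : x != [::] -> y != [::] -> z != [::] ->
  wev (u ++ (x ++ (y ++ z)) ++ v) = G u v (amul (amul (wev x) (wev y)) (wev z)).
Proof.
move=> hx hy hz.
have hyz : y ++ z != [::] by case: y hy.
have hxyz : x ++ (y ++ z) != [::] by case: x hx.
have hxyzv : (x ++ (y ++ z)) ++ v != [::] by case: (x ++ (y ++ z)) hxyz.
rewrite wev_catL // wev_catR // wev_cat // wev_cat // amulA.
by rewrite /G.
Qed.

Lemma peval_gen u x y z v : second_type A ->
  x != [::] -> y != [::] -> z != [::] -> peval (gen u x y z v) = 0.
Proof.
move=> HS hx hy hz.
rewrite /peval /gen !big_cons big_nil /= !wev3 //.
have h := HS (wev x) (wev y) (wev z).
rewrite -[RHS](G0 u v) -[in RHS]h !GD !GN.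
by rewrite !mulr1z !mulrN1z ?addr0 !addrA.
Qed.

Definition coef (P : poly) (w : seq nat) : int :=
  foldr (fun t acc => if t.2 == w then t.1 + acc else acc) 0 P.

Lemma peval_coef P S : uniq S -> {subset map snd P <= S} ->
  peval P = \sum_(w <- S) wev w *~ coef P w.
Proof.
move=> uS; elim: P => [|t P IH] sub.
  by rewrite /peval big_nil /= big1 // => w _; rewrite mulr0z.
have ht : t.2 \in S by apply: sub; rewrite inE eqxx.
have sub' : {subset map snd P <= S} by move=> w hw; apply: sub; rewrite inE hw orbT.
rewrite /peval big_cons -/(peval P) (IH sub').
have -> : \sum_(w <- S) wev w *~ coef (t :: P) w =
   \sum_(w <- S) (wev w *~ (if t.2 == w then t.1 else 0) + wev w *~ coef P w).
  apply: eq_bigr => w _ /=; rewrite -mulrzDr.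
  by case: eqP => _; rewrite ?add0r.
rewrite big_split /=; congr (_ + _).
rewrite (bigD1_seq t.2) //= eqxx big1 ?addr0 // => w /negbTE.
by rewrite eq_sym => ->; rewrite mulr0z.
Qed.

Lemma peval_zero P : all (fun w => coef P w == 0) (undup (map snd P)) -> peval P = 0.
Proof.
move=> /allP h; rewrite (@peval_coef P (undup (map snd P)) (undup_uniq _)); last by move=> w; rewrite mem_undup.
by rewrite big1_seq // => w /andP [_ /h /eqP ->]; rewrite mulr0z.
Qed.

End Aux.

Definition tgt : poly := [:: (1, [::0;1;2;3;4]); (-1, [::0;1;2;4;3]);
  (1, [::1;2;0;4;3]); (-1, [::1;2;0;3;4])].
Definition combo : seq (int * seq nat) :=
  scl (6%:Z) tgt ++
  scl (-(1%:Z)) (gen [::] [::0] [::1] [::2] [::3;4]) ++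
  scl (-(3%:Z)) (gen [::] [::0] [::1] [::2;3] [::4]) ++
  scl (3%:Z) (gen [::] [::0] [::1;2] [::3] [::4]) ++
  scl (-(2%:Z)) (gen [::] [::0;1] [::2] [::3] [::4]) ++
  scl (-(5%:Z)) (gen [::] [::0;1;2] [::3] [::4] [::]) ++
  scl (7%:Z) (gen [::0] [::1] [::2] [::3] [::4]) ++
  scl (-(9%:Z)) (gen [::0] [::1] [::2] [::3;4] [::]) ++
  scl (-(1%:Z)) (gen [::0] [::1] [::2;3] [::4] [::]) ++
  scl (7%:Z) (gen [::0] [::1;2] [::3] [::4] [::]) ++
  scl (-(2%:Z)) (gen [::0;1] [::2] [::3] [::4] [::]) ++
  scl (3%:Z) (gen [::] [::0] [::1] [::2] [::4;3]) ++
  scl (-(3%:Z)) (gen [::] [::0] [::1] [::2;4] [::3]) ++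
  scl (6%:Z) (gen [::] [::0] [::1;2] [::4] [::3]) ++
  scl (3%:Z) (gen [::] [::0] [::1;2] [::4;3] [::]) ++
  scl (-(3%:Z)) (gen [::] [::0] [::1;2;4] [::3] [::]) ++
  scl (-(3%:Z)) (gen [::] [::0;1] [::2] [::4] [::3]) ++
  scl (1%:Z) (gen [::] [::0;1] [::2] [::4;3] [::]) ++
  scl (-(5%:Z)) (gen [::] [::0;1] [::2;4] [::3] [::]) ++
  scl (2%:Z) (gen [::0] [::1] [::2] [::4] [::3]) ++
  scl (3%:Z) (gen [::0] [::1] [::2] [::4;3] [::]) ++
  scl (2%:Z) (gen [::0] [::1] [::2;4] [::3] [::]) ++
  scl (2%:Z) (gen [::] [::0] [::1] [::3] [::2;4]) ++
  scl (-(3%:Z)) (gen [::] [::0] [::1] [::3;2] [::4]) ++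
  scl (3%:Z) (gen [::] [::0] [::1;3] [::2] [::4]) ++
  scl (-(3%:Z)) (gen [::] [::0;1] [::3;2] [::4] [::]) ++
  scl (1%:Z) (gen [::] [::0;1;3] [::2] [::4] [::]) ++
  scl (2%:Z) (gen [::0] [::1] [::3;2] [::4] [::]) ++
  scl (-(2%:Z)) (gen [::0] [::1;3] [::2] [::4] [::]) ++
  scl (-(4%:Z)) (gen [::] [::0] [::1] [::3] [::4;2]) ++
  scl (1%:Z) (gen [::] [::0] [::1] [::3;4] [::2]) ++
  scl (-(7%:Z)) (gen [::] [::0] [::1;3] [::4] [::2]) ++
  scl (3%:Z) (gen [::] [::0] [::1;3] [::4;2] [::]) ++
  scl (-(3%:Z)) (gen [::] [::0] [::1;3;4] [::2] [::]) ++
  scl (4%:Z) (gen [::] [::0;1] [::3] [::4] [::2]) ++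
  scl (-(2%:Z)) (gen [::0] [::1] [::3] [::4] [::2]) ++
  scl (2%:Z) (gen [::] [::0] [::1] [::4] [::2;3]) ++
  scl (-(5%:Z)) (gen [::] [::0] [::1] [::4;2] [::3]) ++
  scl (3%:Z) (gen [::] [::0] [::1;4] [::2] [::3]) ++
  scl (5%:Z) (gen [::] [::0;1;4] [::2] [::3] [::]) ++
  scl (-(5%:Z)) (gen [::0] [::1;4] [::2] [::3] [::]) ++
  scl (5%:Z) (gen [::] [::0] [::1] [::4] [::3;2]) ++
  scl (-(5%:Z)) (gen [::] [::0] [::1] [::4;3] [::2]) ++
  scl (3%:Z) (gen [::] [::0] [::1;4] [::3] [::2]) ++
  scl (3%:Z) (gen [::] [::0] [::1;4] [::3;2] [::]) ++
  scl (-(3%:Z)) (gen [::] [::0] [::1;4;3] [::2] [::]) ++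
  scl (-(3%:Z)) (gen [::] [::0] [::2;1;3] [::4] [::]) ++
  scl (3%:Z) (gen [::] [::0;2] [::1] [::3] [::4]) ++
  scl (-(4%:Z)) (gen [::] [::0;2] [::1] [::3;4] [::]) ++
  scl (7%:Z) (gen [::] [::0;2] [::1;3] [::4] [::]) ++
  scl (-(3%:Z)) (gen [::] [::0;2;1] [::3] [::4] [::]) ++
  scl (-(5%:Z)) (gen [::0] [::2;1] [::3] [::4] [::]) ++
  scl (-(3%:Z)) (gen [::] [::0] [::2;1;4] [::3] [::]) ++
  scl (-(1%:Z)) (gen [::] [::0;2] [::1] [::4] [::3]) ++
  scl (2%:Z) (gen [::] [::0;2] [::1] [::4;3] [::]) ++
  scl (-(3%:Z)) (gen [::] [::0;2] [::1;4] [::3] [::]) ++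
  scl (-(4%:Z)) (gen [::] [::0;2] [::3;1] [::4] [::]) ++
  scl (-(1%:Z)) (gen [::] [::0;2;3] [::1] [::4] [::]) ++
  scl (-(1%:Z)) (gen [::0] [::2] [::3;1] [::4] [::]) ++
  scl (7%:Z) (gen [::] [::0;2] [::3] [::4] [::1]) ++
  scl (-(2%:Z)) (gen [::0] [::2] [::3] [::4] [::1]) ++
  scl (5%:Z) (gen [::] [::0;2;4] [::1] [::3] [::]) ++
  scl (-(2%:Z)) (gen [::] [::0] [::2] [::4] [::3;1]) ++
  scl (2%:Z) (gen [::] [::0] [::2] [::4;3] [::1]) ++
  scl (2%:Z) (gen [::] [::0] [::2;4] [::3] [::1]) ++
  scl (-(3%:Z)) (gen [::] [::0] [::3;1;2] [::4] [::]) ++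
  scl (4%:Z) (gen [::] [::0;3] [::1] [::2] [::4]) ++
  scl (-(6%:Z)) (gen [::] [::0;3] [::1;2] [::4] [::]) ++
  scl (4%:Z) (gen [::] [::0;3;1] [::2] [::4] [::]) ++
  scl (4%:Z) (gen [::] [::0] [::3;1] [::4] [::2]) ++
  scl (1%:Z) (gen [::] [::0;3] [::1] [::4] [::2]) ++
  scl (2%:Z) (gen [::] [::0;3] [::1] [::4;2] [::]) ++
  scl (-(3%:Z)) (gen [::] [::1;0] [::2] [::3] [::4]) ++
  scl (-(3%:Z)) (gen [::] [::1;0;2] [::3] [::4] [::]) ++
  scl (3%:Z) (gen [::] [::1;0] [::2] [::4] [::3]) ++
  scl (-(6%:Z)) (gen [::] [::1;0] [::2] [::4;3] [::]) ++
  scl (6%:Z) (gen [::] [::1;0] [::2;4] [::3] [::]) ++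
  scl (6%:Z) (gen [::] [::1;0] [::3;2] [::4] [::]).

Lemma combo_zero : all (fun w => coef combo w == 0) (undup (map snd combo)).
Proof. by vm_compute. Qed.

Theorem mainTheorem2 (F : fieldType) (charF0 : [pchar F] =i pred0)
  (A : assocAlg F) (i : nat -> A) (Hfree : is_free_As2 i) :
  forall a b c d e : A,
    amul (amul (amul (amul a b) c) d) e =
    amul (amul (amul (amul a b) c) e) d
    - amul (amul (amul (amul b c) a) e) d
    + amul (amul (amul (amul b c) a) d) e.
Proof.
move=> a b c d e.
have HS : second_type A by case: Hfree.
set env := fun n => nth 0 [:: a; b; c; d; e] n.
have H0 := @peval_zero F A env combo combo_zero.
rewrite /combo !peval_cat !peval_scl !peval_gen // in H0.
rewrite !mul0rz !addr0 /peval /tgt !big_cons big_nil /= in H0.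
rewrite !mulr1z !mulrN1z addr0 in H0.
apply/eqP; rewrite -subr_eq0; apply/eqP.
set X := (X in X = 0).
have HX : X *~ 6 = 0.
  rewrite -H0 /X; congr (_ *~ _).
  by rewrite !opprD !opprK !addrA.
have ch := charF0.
move/pcharf0P: ch => ch.
have : (6%:R : F) *: X = 0 by rewrite scaler_nat -mulrz_nat.
move/eqP; rewrite scaler_eq0 ch /= => /eqP //.
Qed.
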